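(* Given $0<\alpha\le\beta<\infty$ there are positive numbers $c_0=c_0(\alpha,\beta)$, $c_1=c_1(\alpha,\beta)$ such that for every Bernstein function $g$ with rate function $r=r[g]$, \[c_0\,r(t)\le|g(z)|\le c_1\,r(t)\] whenever $t>0$ and $\operatorname{Re}z>0$ satisfy $\alpha\le t\operatorname{Re}z\le t|z|\le\beta$.
   Context: A Bernstein function $g\sim(a,b,\mu)$ is $g(z)=a+bz+\int_{(0,\infty)}(1-e^{-sz})\mu(\mathrm ds)$ ($\operatorname{Re} z>0$) with $a,b\ge0$, $\mu$ positive Radon on $(0,\infty)$, $\int\frac{s}{1+s}\mu(\mathrm ds)<\infty$. Rate function $r[g](t):=\frac a2+\frac bt+\int_{(0,\infty)}\min(s/t,1)\mu(\mathrm ds)$, $t>0$. *)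

(* Defs.v *)
From HB Require Import structures.
From mathcomp Require Import all_boot all_order all_algebra.
From mathcomp Require Import all_classical all_reals all_analysis.
Set Implicit Arguments. Unset Strict Implicit. Unset Printing Implicit Defensive.
Import Order.TTheory GRing.Theory Num.Theory.
Import numFieldNormedType.Exports.
Local Open Scope classical_set_scope.
Local Open Scope ring_scope.

(* A Bernstein function g ~ (a,b,mu): a, b >= 0, mu a positive (Borel) measure
   on R, considered on (0,oo), with \int_(0,oo) s/(1+s) mu(ds) < oo
   (this implies local finiteness on (0,oo), i.e. mu is Radon there). *)
Definition bernstein_triple (R : realType) (a b : R)
  (mu : {measure set R -> \bar R}) : Prop :=
  0 <= a /\ 0 <= b /\
  (\int[mu]_(s in `]0%R, +oo[) (s / (1 + s))%:E < +oo)%E.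

(* For z = x + i y (x > 0):  1 - e^{-s z} = (1 - e^{-s x} cos (s y)) + i e^{-s x} sin (s y). *)
Definition bernstein_re (R : realType) (a b : R) (mu : {measure set R -> \bar R})
  (x y : R) : R :=
  a + b * x + Rintegral mu `]0%R, +oo[ (fun s => 1 - expR (- (s * x)) * cos (s * y)).

Definition bernstein_im (R : realType) (a b : R) (mu : {measure set R -> \bar R})
  (x y : R) : R :=
  b * y + Rintegral mu `]0%R, +oo[ (fun s => expR (- (s * x)) * sin (s * y)).

Definition bernstein_abs (R : realType) (a b : R) (mu : {measure set R -> \bar R})
  (x y : R) : R :=
  Num.sqrt (bernstein_re a b mu x y ^+ 2 + bernstein_im a b mu x y ^+ 2).

Definition rate (R : realType) (a b : R) (mu : {measure set R -> \bar R}) (t : R) : R :=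
  a / 2 + b / t + Rintegral mu `]0%R, +oo[ (fun s => Num.min (s / t) 1).

(* Main.v *)
Require Import Defs.
From HB Require Import structures.
From mathcomp Require Import all_boot all_order all_algebra.
From mathcomp Require Import all_classical all_reals all_analysis.
From mathcomp Require Import ring lra measurable_realfun.
Import Order.TTheory GRing.Theory Num.Theory.
Import numFieldNormedType.Exports.
Local Open Scope classical_set_scope.
Local Open Scope ring_scope.

Section aux.
Context {R : realType}.
Implicit Types (u v w s t : R).

Lemma sin_le_abs u : `|sin u| <= `|u|.
Proof.
wlog u0 : u / 0 <= u.
  move=> H; case: (leP 0 u) => [|u0]; first exact: H.
  by rewrite -normrN -sinN -(normrN u); apply: H; rewrite oppr_ge0 ltW.
case: (eqVneq u 0) => [->|un0]; first by rewrite sin0 normr0.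
have up : 0 < u by rewrite lt_neqAle eq_sym un0.
have [c _ h] := MVT (f:=sin) (df:=cos) up (fun x _ => is_derive_sin x)
   (continuous_subspaceT (@continuous_sin R)).
rewrite sin0 !subr0 in h; rewrite h normrM.
by apply: ler_piMl => //; exact: cos_max.
Qed.

Lemma one_minus_cos w : 1 - cos w <= `|w|.
Proof.
have -> : w = (w / 2) *+ 2 by rewrite -mulr_natr divfK.
rewrite cos_mulr2n cos2sin2.
have h1 := sin_max (w / 2); have h2 := sin_le_abs (w / 2).
have h0 : 0 <= `|sin (w/2)| by [].
rewrite -[sin (w / 2) ^+ 2]real_normK ?num_real // normrMn.
set p := `|sin (w / 2)| in h1 h2 h0 *; set q := `|w / 2| in h2 *.
have : p * p <= p * q by apply: ler_wpM2l.
have : p * p <= p by rewrite -[X in _ <= X]mulr1; apply: ler_wpM2l.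
rewrite expr2 => ? ?. lra.
Qed.

Lemma exp_up v : 0 <= v -> 1 - expR (- v) <= v.
Proof. by move=> _; have := expR_ge1Dx (- v); lra. Qed.

Lemma exp_low v : 0 <= v -> Num.min v 1 <= 2 * (1 - expR (- v)).
Proof.
move=> v0.
have hE : 0 < expR (- v) := expR_gt0 _.
have hF : 1 + v <= expR v := expR_ge1Dx v.
have hEF : expR (- v) * expR v = 1 by rewrite -expRD addNr expR0.
have h : expR (- v) * (1 + v) <= 1 by rewrite -[leRHS]hEF ler_wpM2l // ltW.
rewrite minEle; case: ifP => hv.
  have : expR (- v) * (1 + v) * (1 - v / 2) <= 1 - v / 2.
    by rewrite -[X in _ <= X]mul1r; apply: ler_wpM2r => //; lra.
  nra.
nra.
Qed.

Lemma expN_le1 v : 0 <= v -> 0 < expR (- v) /\ expR (- v) <= 1.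
Proof.
move=> v0; split; first exact: expR_gt0.
have hE : 0 < expR (- v) := expR_gt0 _.
have hF : 1 + v <= expR v := expR_ge1Dx v.
have hEF : expR (- v) * expR v = 1 by rewrite -expRD addNr expR0.
nra.
Qed.

Lemma pw_low (alpha t x y s : R) : 0 < alpha -> 0 < t -> 0 < x -> alpha <= t * x ->
  0 < s ->
  Num.min alpha 1 / 2 * Num.min (s / t) 1 <= 1 - expR (- (s * x)) * cos (s * y).
Proof.
move=> a0 t0 x0 hax s0.
have hu : s / t * t = s by rewrite divfK // gt_eqF.
have hu0 : 0 <= s / t by rewrite divr_ge0 // ltW.
have sx0 : 0 <= s * x by rewrite mulr_ge0 // ltW.
have [hE hE1] := expN_le1 _ sx0.
have hl := exp_low _ sx0.
have hc := cos_le1 (s * y).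
have hsx : s * x = s / t * (t * x) by rewrite mulrA hu.
set u := s / t in hu hu0 hsx *.
set E := expR (- (s * x)) in hE hE1 hl *.
have hm1 : Num.min alpha 1 <= alpha by rewrite ge_min lexx.
have hm2 : Num.min alpha 1 <= 1 by rewrite ge_min lexx orbT.
have hm0 : 0 <= Num.min alpha 1 by rewrite le_min (ltW a0) ler01.
have hn1 : Num.min u 1 <= u by rewrite ge_min lexx.
have hn2 : Num.min u 1 <= 1 by rewrite ge_min lexx orbT.
have hn0 : 0 <= Num.min u 1 by rewrite le_min hu0 ler01.
set mm := Num.min alpha 1 in hm1 hm2 hm0 *.
set n := Num.min u 1 in hn1 hn2 hn0 *.
have hM : mm * n <= Num.min (s * x) 1.
  rewrite le_min; apply/andP; split; last by nra.
  rewrite hsx.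
  have : (alpha - mm) * n >= 0 by nra.
  have : alpha * (u - n) >= 0 by nra.
  have : u * (t * x - alpha) >= 0 by nra.
  nra.
have : E * cos (s * y) <= E by rewrite -[leRHS]mulr1 ler_wpM2l // ltW.
lra.
Qed.

Lemma pw_up1 (beta t x y s : R) : 0 < t -> 0 < x -> t * x <= beta ->
  t * `|y| <= beta -> 0 < s ->
  `|1 - expR (- (s * x)) * cos (s * y)| <= 3 * Num.max beta 1 * Num.min (s / t) 1.
Proof.
move=> t0 x0 hxb hyb s0.
have hu : s / t * t = s by rewrite divfK // gt_eqF.
have hu0 : 0 <= s / t by rewrite divr_ge0 // ltW.
have sx0 : 0 <= s * x by rewrite mulr_ge0 // ltW.
have [hE hE1] := expN_le1 _ sx0.
have hl := exp_up _ sx0.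
have hc := cos_le1 (s * y).
have hc' := cos_geN1 (s * y).
have hcy := one_minus_cos (s * y).
rewrite normrM (gtr0_norm s0) in hcy.
have hsx : s * x = s / t * (t * x) by rewrite mulrA hu.
have hsy : s * `|y| = s / t * (t * `|y|) by rewrite mulrA hu.
set u := s / t in hu hu0 hsx hsy *.
set E := expR (- (s * x)) in hE hE1 hl *.
set c := cos (s * y) in hc hc' hcy *.
have hEc : E * c <= 1 by nra.
rewrite ger0_norm; last by lra.
have hB1 : beta <= Num.max beta 1 by rewrite le_max lexx.
have hB2 : 1 <= Num.max beta 1 by rewrite le_max lexx orbT.
set B := Num.max beta 1 in hB1 hB2 *.
have h1 : 1 - E * c <= (1 - E) + (1 - c) by nra.
have hy0 : 0 <= `|y| by [].
rewrite minEle; case: ifP => hu1.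
  have : s * x <= u * B by nra.
  have : s * `|y| <= u * B by nra.
  nra.
nra.
Qed.

Lemma pw_up2 (beta t x y s : R) : 0 < t -> 0 < x ->
  t * `|y| <= beta -> 0 < s ->
  `|expR (- (s * x)) * sin (s * y)| <= Num.max beta 1 * Num.min (s / t) 1.
Proof.
move=> t0 x0 hyb s0.
have hu : s / t * t = s by rewrite divfK // gt_eqF.
have hu0 : 0 <= s / t by rewrite divr_ge0 // ltW.
have sx0 : 0 <= s * x by rewrite mulr_ge0 // ltW.
have [hE hE1] := expN_le1 _ sx0.
have hs1 := sin_max (s * y).
have hs2 := sin_le_abs (s * y).
rewrite normrM (gtr0_norm s0) in hs2.
rewrite normrM (gtr0_norm hE).
have hsy : s * `|y| = s / t * (t * `|y|) by rewrite mulrA hu.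
set u := s / t in hu hu0 hsy *.
set E := expR (- (s * x)) in hE hE1 *.
have hS0 : 0 <= `|sin (s * y)| by [].
set S := `|sin (s * y)| in hs1 hs2 hS0 *.
have hB1 : beta <= Num.max beta 1 by rewrite le_max lexx.
have hB2 : 1 <= Num.max beta 1 by rewrite le_max lexx orbT.
set B := Num.max beta 1 in hB1 hB2 *.
have hy0 : 0 <= `|y| by [].
have : E * S <= S by nra.
rewrite minEle; case: ifP => hu1.
  have : s * `|y| <= u * B by nra.
  nra.
nra.
Qed.

Lemma sqrt_le_sum (p q : R) : Num.sqrt (p ^+ 2 + q ^+ 2) <= `|p| + `|q|.
Proof.
have hp : p ^+ 2 = `|p| ^+ 2 by rewrite real_normK // num_real.
have hq : q ^+ 2 = `|q| ^+ 2 by rewrite real_normK // num_real.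
have hP : 0 <= `|p| by []. have hQ : 0 <= `|q| by [].
have h : p ^+ 2 + q ^+ 2 <= (`|p| + `|q|) ^+ 2.
  rewrite hp hq; set P := `|p| in hP *; set Q := `|q| in hQ *.
  rewrite !expr2; nra.
apply: le_trans (ler_wsqrtr h) _.
by rewrite sqrtr_sqr ger0_norm // addr_ge0.
Qed.

End aux.

Section meas.
Context {R : realType} (mu : {measure set R -> \bar R}).
Local Notation D := ([set` `]0%R, +oo[%R] : set R).

Lemma mD : measurable D. Proof. exact: measurable_itv. Qed.

Lemma Dpos s : D s -> 0 < s.
Proof. by rewrite /= in_itv /= andbT. Qed.

Lemma k0_int :
  (\int[mu]_(s in D) (s / (1 + s))%:E < +oo)%E ->
  mu.-integrable D (EFin \o (fun s => s / (1 + s))).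
Proof.
move=> hfin; apply/integrableP; split.
  apply/measurable_EFinP.
  apply: measurable_realfun.open_continuous_measurable_fun; first exact: interval_open.
  move=> s; rewrite inE => /Dpos s0.
  apply: (@continuousM R R id (fun s => (1 + s)^-1) s); first exact: cvg_id.
  apply: (@continuousV R R (fun s => 1 + s) s); first by rewrite gt_eqF // ltr_pwDr.
  by apply: continuousD; [exact: cst_continuous| exact: cvg_id].
apply: le_lt_trans hfin; rewrite le_eqVlt; apply/orP; left; apply/eqP.
apply: eq_integral => s; rewrite inE => /Dpos s0 /=.
by rewrite ger0_norm // divr_ge0 // ltW //; lra.
Qed.

Lemma min_int t :
  (\int[mu]_(s in D) (s / (1 + s))%:E < +oo)%E -> 0 < t ->
  mu.-integrable D (EFin \o (fun s => Num.min (s / t) 1)).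
Proof.
move=> hfin t0.
pose c := (2 + 2 / t). pose k := fun s : R => s / (1 + s).
apply: (@le_integrable _ _ _ mu _ mD _ (fun s => (c%:E * (EFin \o k) s)%E)).
- apply/measurable_EFinP; apply: measurable_realfun.measurable_minr.
    exact: measurable_realfun.mulrr_measurable.
  exact: measurable_cst.
- move=> s /Dpos s0 /=.
  rewrite lee_fin; apply: (le_trans _ (ler_norm _)).
  rewrite ger0_norm; last by rewrite le_min; apply/andP; split=> //; rewrite divr_ge0 // ltW.
  have hs1 : 0 < 1 + s by lra.
  have hq : k s * (1 + s) = s by rewrite divfK // gt_eqF.
  have hu : s / t * t = s by rewrite divfK // gt_eqF.
  have hv : 2 / t * t = 2 by rewrite divfK // gt_eqF.
  have hq0 : 0 <= k s by rewrite divr_ge0 // ltW.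
  have hv0 : 0 <= 2 / t by rewrite divr_ge0 // ltW.
  rewrite /c; set q := k s in hq hq0 *; set u := s / t in hu *; set w := 2 / t in hv hv0 *.
  have e : w * q * t = 2 * q by rewrite mulrAC hv.
  rewrite ge_min; apply/orP; case: (leP s 1) => hs.
    left; have h2q : s <= 2 * q by nra.
    have : u <= w * q by nra.
    nra.
  right; nra.
- apply: integrableZl => //. exact: (k0_int hfin).
Qed.

Lemma bound_int t C (f : R -> R) :
  (\int[mu]_(s in D) (s / (1 + s))%:E < +oo)%E -> 0 < t ->
  measurable_fun D f ->
  (forall s, D s -> `|f s| <= C * Num.min (s / t) 1) ->
  mu.-integrable D (EFin \o f).
Proof.
move=> hfin t0 mf hb.
pose m := fun s : R => Num.min (s / t) 1.
apply: (@le_integrable _ _ _ mu _ mD _ (fun s => (C%:E * (EFin \o m) s)%E)).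
- exact/measurable_EFinP.
- move=> s Ds /=; rewrite lee_fin; exact: le_trans (hb s Ds) (ler_norm _).
- apply: integrableZl => //; exact: (min_int t hfin t0).
Qed.

Lemma mf1 x y : measurable_fun D (fun s : R => 1 - expR (- (s * x)) * cos (s * y)).
Proof.
apply: measurable_funB; first exact: measurable_cst.
apply: measurable_funM.
  apply: measurableT_comp; first exact: measurable_expR.
  apply: measurable_funN; exact: mulrr_measurable.
apply: measurableT_comp; first exact: (continuous_measurable_fun (@continuous_cos R)).
exact: mulrr_measurable.
Qed.

Lemma mf2 x y : measurable_fun D (fun s : R => expR (- (s * x)) * sin (s * y)).
Proof.
apply: measurable_funM.
  apply: measurableT_comp; first exact: measurable_expR.
  apply: measurable_funN; exact: mulrr_measurable.
apply: measurableT_comp; first exact: (continuous_measurable_fun (@continuous_sin R)).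
exact: mulrr_measurable.
Qed.

Lemma mfm t : measurable_fun D (fun s : R => Num.min (s / t) 1).
Proof.
apply: measurable_minr; first exact: mulrr_measurable.
exact: measurable_cst.
Qed.

End meas.

Theorem proposition4p2 (R : realType) (alpha beta : R) :
  0 < alpha -> alpha <= beta ->
  exists c0 c1 : R, 0 < c0 /\ 0 < c1 /\
    forall (a b : R) (mu : {measure set R -> \bar R}),
      bernstein_triple a b mu ->
      forall t x y : R, 0 < t -> 0 < x ->
        alpha <= t * x -> t * x <= t * Num.sqrt (x ^+ 2 + y ^+ 2) ->
        t * Num.sqrt (x ^+ 2 + y ^+ 2) <= beta ->
        c0 * rate a b mu t <= bernstein_abs a b mu x y /\
        bernstein_abs a b mu x y <= c1 * rate a b mu t.
Proof.
move=> a0 ab.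
have hm1 : Num.min alpha 1 <= alpha by rewrite ge_min lexx.
have hm2 : Num.min alpha 1 <= 1 by rewrite ge_min lexx orbT.
have hm0 : 0 < Num.min alpha 1 by rewrite lt_min a0 ltr01.
have hB1 : beta <= Num.max beta 1 by rewrite le_max lexx.
have hB2 : 1 <= Num.max beta 1 by rewrite le_max lexx orbT.
exists (Num.min alpha 1 / 2), (4 * Num.max beta 1).
split; first by rewrite divr_gt0.
split; first by lra.
move=> a b mu [ha [hb hfin]] t x y t0 x0 hax _ hsb.
set sq := Num.sqrt (x ^+ 2 + y ^+ 2) in hsb.
have hysq : `|y| <= sq.
  rewrite -sqrtr_sqr /sq ler_wsqrtr // lerDr sqr_ge0 //.
have hxsq : x <= sq.
  rewrite -(gtr0_norm x0) -sqrtr_sqr /sq ler_wsqrtr // lerDl sqr_ge0 //.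
have hxb : t * x <= beta by apply: le_trans hsb; rewrite ler_wpM2l // ltW.
have hyb : t * `|y| <= beta by apply: le_trans hsb; rewrite ler_wpM2l // ltW.
pose D := ([set` `]0%R, +oo[%R] : set R).
pose m := fun s : R => Num.min (s / t) 1.
pose f1 := fun s : R => 1 - expR (- (s * x)) * cos (s * y).
pose f2 := fun s : R => expR (- (s * x)) * sin (s * y).
set B := Num.max beta 1 in hB1 hB2 *.
set c0 := Num.min alpha 1 / 2.
have hmD : measurable D := mD.
have i_m : mu.-integrable D (EFin \o m) := min_int mu t hfin t0.
have i_1 : mu.-integrable D (EFin \o f1).
  apply: (bound_int mu t (3 * B) f1 hfin t0 (mf1 x y)) => s /Dpos s0.
  exact: pw_up1.
have i_2 : mu.-integrable D (EFin \o f2).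
  apply: (bound_int mu t B f2 hfin t0 (mf2 x y)) => s /Dpos s0.
  exact: (pw_up2 beta t x y s t0 x0 hyb s0).
have i_cm (C : R) : 0 <= C -> mu.-integrable D (EFin \o (fun s => C * m s)).
  move=> C0; apply: (bound_int mu t C _ hfin t0).
    by apply: measurable_funM; [exact: measurable_cst| exact: mfm].
  move=> s /Dpos s0; rewrite ger0_norm //; apply: mulr_ge0 => //.
  by rewrite le_min ler01 andbT divr_ge0 // ltW.
have I0 : 0 <= Rintegral mu D m.
  apply: Rintegral_ge0 => s /Dpos s0.
  by rewrite /m le_min ler01 andbT divr_ge0 // ltW.
have hJ1l : c0 * Rintegral mu D m <= Rintegral mu D f1.
  rewrite -RintegralZl //; apply: le_Rintegral => //.
    by apply: i_cm; rewrite /c0; lra.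
  move=> s /Dpos s0; exact: pw_low.
have hJ1u : `|Rintegral mu D f1| <= 3 * B * Rintegral mu D m.
  apply: le_trans (le_normr_Rintegral hmD i_1) _.
  rewrite -RintegralZl //; apply: le_Rintegral => //.
    exact: integrable_norm.
    by apply: i_cm; lra.
  move=> s /Dpos s0; exact: pw_up1.
have hJ2u : `|Rintegral mu D f2| <= B * Rintegral mu D m.
  apply: le_trans (le_normr_Rintegral hmD i_2) _.
  rewrite -RintegralZl //; apply: le_Rintegral => //.
    exact: integrable_norm.
    by apply: i_cm; lra.
  move=> s /Dpos s0; exact: (pw_up2 beta t x y s t0 x0 hyb s0).
rewrite /bernstein_abs /bernstein_re /bernstein_im /rate.
rewrite -/D -/m -/f1 -/f2.
set I := Rintegral mu D m in I0 hJ1l hJ1u hJ2u *.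
set J1 := Rintegral mu D f1 in hJ1l hJ1u *.
set J2 := Rintegral mu D f2 in hJ2u *.
have hq : b / t * t = b by rewrite divfK // gt_eqF.
have hq0 : 0 <= b / t by rewrite divr_ge0 // ltW.
set q := b / t in hq hq0 *.
have hbx : b * x = q * (t * x) by rewrite mulrA hq.
have hby : b * `|y| = q * (t * `|y|) by rewrite mulrA hq.
have hc0 : c0 <= alpha / 2 by rewrite /c0; lra.
have hc1 : c0 <= 1 / 2 by rewrite /c0; lra.
set re := a + b * x + J1.
set im := b * y + J2.
split.
  have h1 : re <= Num.sqrt (re ^+ 2 + im ^+ 2).
    apply: le_trans (ler_norm re) _.
    rewrite -sqrtr_sqr ler_wsqrtr // lerDl sqr_ge0 //.
  apply: le_trans h1; rewrite /re hbx.
  have e1 : c0 * q <= q * (t * x) by rewrite mulrC ler_wpM2l //; lra.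
  have e2 : c0 * (a / 2) <= 1 * (a / 2) by rewrite ler_wpM2r //; lra.
  lra.
have h2 : Num.sqrt (re ^+ 2 + im ^+ 2) <= `|re| + `|im|.
  exact: sqrt_le_sum.
apply: le_trans h2 _.
have hre : `|re| <= a + b * x + `|J1|.
  rewrite /re; apply: le_trans (ler_normD _ _) _; rewrite lerD2r.
  apply: le_trans (ler_normD _ _) _.
  by rewrite ger0_norm // ger0_norm // mulr_ge0 // ltW.
have him : `|im| <= b * `|y| + `|J2|.
  rewrite /im; apply: le_trans (ler_normD _ _) _; rewrite lerD2r.
  by rewrite normrM ger0_norm.
rewrite hbx in hre; rewrite hby in him.
have e1 : q * (t * x) <= q * B by rewrite ler_wpM2l //; lra.
have e2 : q * (t * `|y|) <= q * B by rewrite ler_wpM2l //; lra.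
have e3 : a * 1 <= a * B by rewrite ler_wpM2l.
have E : 4 * B * (a / 2 + q + I) = 2 * (a * B) + 4 * (q * B) + 4 * (B * I) by field.
rewrite E; rewrite -mulrA in hJ1u; rewrite mulr1 in e3.
have e4 : 0 <= a * B by rewrite mulr_ge0 //; lra.
have e5 : 0 <= q * B by rewrite mulr_ge0 //; lra.
move: hre him hJ1u hJ2u e1 e2 e3 e4 e5.
move: (`|re|) (`|im|) (`|J1|) (`|J2|) (q * (t * x)) (q * (t * `|y|)) (a * B) (q * B) (B * I).
move=> *; lra.
Qed.
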